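(* Let $g\ge1$ and let $\alpha_1,\dots,\alpha_{2g-1},\alpha$ be mutually distinct complex numbers. Let $\widehat q^{(g)0}_{ij}$ and $\widehat q^{(g-1)}_{ij}$ be defined by the expansions (in $z_1,z_2$ with $x_k=z_k^{-2}$) $$\Big(\frac1{2(x_1-x_2)^2}+\frac{H_g(x_1,x_2)}{4(x_1-x_2)^2y^{(g)}_1y^{(g)}_2}\Big)dx_1dx_2=\Big(\frac1{(z_1-z_2)^2}+\sum_{i,j\ge1}\widehat q^{(g)0}_{ij}z_1^{i-1}z_2^{j-1}\Big)dz_1dz_2,$$ $$\Big(\frac1{2(x_1-x_2)^2}+\frac{H_{g-1}(x_1,x_2)}{4(x_1-x_2)^2y^{(g-1)}_1y^{(g-1)}_2}\Big)dx_1dx_2=\Big(\frac1{(z_1-z_2)^2}+\sum_{i,j\ge1}\widehat q^{(g-1)}_{ij}z_1^{i-1}z_2^{j-1}\Big)dz_1dz_2,$$ and put $Q_{ij}=-\widehat q^{(g)0}_{ij}+\widehat q^{(g-1)}_{ij}$. Then for all $i,j\ge0$, $$Q_{2i+1,2j+1}=-\alpha\sum_{k=0}^{g-1}\tilde\mu_{4k}\,s_{(i-k)}(\Lambda)\,s_{(j-k)}(\Lambda).$$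
   Context: $f_{g-1}(x)=\prod_{j=1}^{2g-1}(x-\alpha_j)=\sum_{i=0}^{2g-1}\tilde\mu_{4g-2-2i}x^i$ and $f_g(x)=(x-\alpha)^2f_{g-1}(x)=\sum_{i=0}^{2g+1}\mu_{4g+2-2i}x^i$, with $\mu_k,\tilde\mu_k=0$ for indices outside these ranges. $H_g(x_1,x_2)=\sum_{i=0}^g(x_1x_2)^i(2\mu_{4g+2-4i}+\mu_{4g-4i}(x_1+x_2))$, $H_{g-1}(x_1,x_2)=\sum_{i=0}^{g-1}(x_1x_2)^i(2\tilde\mu_{4g-2-4i}+\tilde\mu_{4g-4-4i}(x_1+x_2))$. $F_0(z)=(\prod_{j=1}^{2g-1}(1-\alpha_jz^2))^{1/2}$ with $F_0(0)=1$, $F(z)=(1-\alpha z^2)F_0(z)$, $y^{(g-1)}_k=z_k^{-(2g-1)}F_0(z_k)$, $y^{(g)}_k=z_k^{-(2g+1)}F(z_k)$. $\Lambda=(\Lambda_1,\Lambda_2,\dots)$ with $\Lambda_n=\frac1{2n}(2\alpha^n+\sum_{j=1}^{2g-1}\alpha_j^n)$; Schur polynomials $s_{(n)}$ are defined by $\exp(\sum_{i\ge1}t_ik^i)=\sum_{n\ge0}s_{(n)}(t)k^n$, and $s_{(n)}=0$ for $n<0$. *)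

(* Defs.v *)
(* Formal power series are represented by their coefficient
   functions; all the "defined by an expansion" objects of the paper are
   rendered as formal power series identities. *)
From HB Require Import structures.
From mathcomp Require Import all_boot all_order all_algebra.
From mathcomp Require Import reals complex.

Set Implicit Arguments.
Unset Strict Implicit.
Unset Printing Implicit Defensive.

Import Order.TTheory GRing.Theory Num.Theory.
Local Open Scope ring_scope.

Section Series.
Variable K : fieldType.

Definition ps := nat -> K.

Definition ps_mul (f g : ps) : ps :=
  fun n => \sum_(k < n.+1) f k * g (n - k)%N.

Fixpoint ps_pow (f : ps) (m : nat) : ps :=
  match m with
  | 0 => fun n => if n == 0%N then 1 else 0
  | m'.+1 => ps_mul f (ps_pow f m')
  end.

Definition ps_of_poly (p : {poly K}) : ps := fun n => p`_n.

(* exp(f) = sum_m f^m / m!, for f with zero constant term (then only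
   m <= n contributes to the coefficient of z^n) *)
Definition ps_exp (f : ps) : ps :=
  fun n => \sum_(m < n.+1) ps_pow f m n / (m`!)%:R.

(* Schur polynomials s_(n)(t):  exp(sum_{i>=1} t_i k^i) = sum_n s_(n)(t) k^n,
   and s_(n) = 0 for n < 0. *)
Definition schur (t : nat -> K) (n : int) : K :=
  match n with
  | Posz m => ps_exp (fun i => if i is 0 then 0 else t i) m
  | Negz _ => 0
  end.

Definition is_sqrt_series (F : ps) (p : {poly K}) : Prop :=
  F 0%N = 1 /\ forall n, ps_mul F F n = p`_n.

(* ---------- two-variable formal power series: (a,b) |-> coeff of z1^a z2^b *)
Definition ps2 := nat -> nat -> K.

Definition ps2_add (A B : ps2) : ps2 := fun a b => A a b + B a b.

Definition ps2_mul (A B : ps2) : ps2 :=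
  fun a b => \sum_(i < a.+1) \sum_(j < b.+1) A i j * B (a - i)%N (b - j)%N.

Definition ps2_mono (c : K) (e1 e2 : nat) : ps2 :=
  fun a b => if (a == e1) && (b == e2) then c else 0.

Definition ps2_tensor (F G : ps) : ps2 := fun a b => F a * G b.

(* for a polynomial p = sum_{i=0}^d mu_{2d-2i} x^i, mu_coef p d k = mu_k,
   with mu_k = 0 for indices outside this range *)
Definition mu_coef (p : {poly K}) (d k : nat) : K :=
  if odd k then 0 else if (k./2 <= d)%N then p`_(d - k./2) else 0.

(* bivariate polynomials in x1, x2 : x1 is the outer variable *)
Definition x1 : {poly {poly K}} := 'X.
Definition x2 : {poly {poly K}} := ('X)%:P.

Definition Hpoly (mu : nat -> K) (h : nat) : {poly {poly K}} :=
  \sum_(i < h.+1) (x1 * x2) ^+ i *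
     ((2 * mu (4 * h + 2 - 4 * i)%N)%:P%:P + (mu (4 * h - 4 * i)%N)%:P%:P * (x1 + x2)).

(* (z1 z2)^N * P(z1^-2, z2^-2), as a power series in z1, z2; this is exact
   when P has degree <= N/2 in each variable (true for the uses below). *)
Definition zsubst (N : nat) (P : {poly {poly K}}) : ps2 :=
  fun a b =>
    if [&& (a <= N)%N, (b <= N)%N, ~~ odd (N - a) & ~~ odd (N - b)]
    then (P`_((N - a)./2))`_((N - b)./2) else 0.

(* The expansion
     ( 1/(2(x1-x2)^2) + H(x1,x2)/(4(x1-x2)^2 y1 y2) ) dx1 dx2
        = ( 1/(z1-z2)^2 + sum_{i,j>=1} q_ij z1^(i-1) z2^(j-1) ) dz1 dz2,
   with x_k = z_k^-2 and y_k = z_k^-(2h+1) F(z_k), F(0) = 1, multiplied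
   through by (z1^2 - z2^2)^2 F(z1) F(z2):
     2 z1 z2 F1 F2 + (z1 z2)^(2h+2) H(z1^-2, z2^-2)
        = (z1 + z2)^2 F1 F2 + (z1^2 - z2^2)^2 F1 F2 * sum_{i,j>=1} q_ij z1^(i-1) z2^(j-1). *)
Definition is_expansion (h : nat) (F : ps) (H : {poly {poly K}})
    (q : nat -> nat -> K) : Prop :=
  let FF := ps2_tensor F F in
  let lhs := ps2_add (ps2_mul (ps2_mono 2 1 1) FF) (zsubst (2 * h + 2) H) in
  let sq_sum := ps2_add (ps2_mono 1 2 0)
                  (ps2_add (ps2_mono 2 1 1) (ps2_mono 1 0 2)) in
  let dif4 := ps2_add (ps2_mono 1 4 0)
                (ps2_add (ps2_mono (-2) 2 2) (ps2_mono 1 0 4)) in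
  let rhs := ps2_add (ps2_mul sq_sum FF)
               (ps2_mul (ps2_mul dif4 FF) (fun a b => q a.+1 b.+1)) in
  forall a b, lhs a b = rhs a b.

Variable g : nat.
Variable alpha_ : 'I_(2 * g - 1) -> K.
Variable alpha : K.

Definition f_gm1 : {poly K} := \prod_(j < 2 * g - 1) ('X - (alpha_ j)%:P).
Definition f_g : {poly K} := ('X - alpha%:P) ^+ 2 * f_gm1.

Definition mu_tilde (k : nat) : K := mu_coef f_gm1 (2 * g - 1) k.
Definition mu (k : nat) : K := mu_coef f_g (2 * g + 1) k.

Definition H_g : {poly {poly K}} := Hpoly mu g.
Definition H_gm1 : {poly {poly K}} := Hpoly mu_tilde g.-1.

Definition F0_square : {poly K} := \prod_(j < 2 * g - 1) (1 - (alpha_ j)%:P * 'X ^+ 2).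

Definition F_of (F0 : ps) : ps := ps_mul (ps_of_poly (1 - alpha%:P * 'X ^+ 2)) F0.

Definition Lambda (n : nat) : K :=
  (2 * alpha ^+ n + \sum_(j < 2 * g - 1) alpha_ j ^+ n) / (2 * n)%:R.

End Series.

(* Main.v *)
Require Import Defs.
From HB Require Import structures.
From mathcomp Require Import all_boot all_order all_algebra.
From mathcomp Require Import reals complex.
From mathcomp Require Import boolp.
From mathcomp Require Import ring zify.
Set Implicit Arguments.
Unset Strict Implicit.
Unset Printing Implicit Defensive.
Import Order.TTheory GRing.Theory Num.Theory.
Local Open Scope ring_scope.

Definition ser (R : Type) := nat -> R.

Section SerRing.
Variable R : comNzRingType.
HB.instance Definition _ := Choice.copy (ser R) (nat -> R).

Definition sadd (f g : ser R) : ser R := fun n => f n + g n.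
Definition sopp (f : ser R) : ser R := fun n => - f n.
Definition szero : ser R := fun _ => 0.
Definition smul (f g : ser R) : ser R := fun n => \sum_(k < n.+1) f k * g (n - k)%N.
Definition sone : ser R := fun n => (n == 0)%:R.

Lemma saddA : associative sadd.
Proof. by move=> f g h; apply/funext=> n; rewrite /sadd addrA. Qed.
Lemma saddC : commutative sadd.
Proof. by move=> f g; apply/funext=> n; rewrite /sadd addrC. Qed.
Lemma sadd0 : left_id szero sadd.
Proof. by move=> f; apply/funext=> n; rewrite /sadd add0r. Qed.
Lemma saddN : left_inverse szero sopp sadd.
Proof. by move=> f; apply/funext=> n; rewrite /sadd /sopp addNr. Qed.

HB.instance Definition _ := GRing.isZmodule.Build (ser R) saddA saddC sadd0 saddN.

Lemma smul_polyE (f g : ser R) (p q : {poly R}) n :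
  (forall k, (k <= n)%N -> f k = p`_k) -> (forall k, (k <= n)%N -> g k = q`_k) ->
  smul f g n = (p * q)`_n.
Proof.
move=> Hf Hg; rewrite coefM /smul; apply: eq_bigr => [[k lk]] _ /=.
by rewrite Hf // Hg // leq_subr.
Qed.

Definition trp (f : ser R) (N : nat) : {poly R} := \poly_(i < N) f i.
Lemma trpE f N k : (k < N)%N -> f k = (trp f N)`_k.
Proof. by move=> kN; rewrite coef_poly kN. Qed.

Lemma smulA : associative smul.
Proof.
move=> f g h; apply/funext=> n.
have E1 : forall k, (k <= n)%N -> smul g h k = (trp g n.+1 * trp h n.+1)`_k.
  move=> k kn; apply: smul_polyE => i ik; apply: trpE; apply: leq_ltn_trans ik _; by rewrite ltnS.
have E2 : forall k, (k <= n)%N -> smul f g k = (trp f n.+1 * trp g n.+1)`_k.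
  move=> k kn; apply: smul_polyE => i ik; apply: trpE; apply: leq_ltn_trans ik _; by rewrite ltnS.
rewrite (smul_polyE (p := trp f n.+1) _ E1); last by move=> k kn; apply: trpE; rewrite ltnS.
rewrite (smul_polyE (q := trp h n.+1) E2); last by move=> k kn; apply: trpE; rewrite ltnS.
by rewrite mulrA.
Qed.

Lemma smulC : commutative smul.
Proof.
move=> f g; apply/funext=> n.
rewrite (smul_polyE (p := trp f n.+1) (q := trp g n.+1)); try by move=> k kn; apply: trpE; rewrite ltnS.
rewrite (smul_polyE (p := trp g n.+1) (q := trp f n.+1)); try by move=> k kn; apply: trpE; rewrite ltnS.
by rewrite mulrC.
Qed.

Lemma smul1 : left_id sone smul.
Proof.
move=> f; apply/funext=> n; rewrite /smul big_ord_recl /= subn0 mul1r big1 ?addr0 //.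
by move=> i _; rewrite /sone /= mul0r.
Qed.

Lemma smulDl : left_distributive smul sadd.
Proof.
move=> f g h; apply/funext=> n; rewrite /smul /sadd -big_split /=.
by apply: eq_bigr => i _; rewrite mulrDl.
Qed.

Lemma sone_neq0 : sone != szero.
Proof.
apply/eqP => /(congr1 (fun f : ser R => f 0%N)); rewrite /sone /szero /=.
by move/eqP; rewrite oner_eq0.
Qed.

HB.instance Definition _ := GRing.Zmodule_isComNzRing.Build (ser R) smulA smulC smul1 smulDl sone_neq0.

Lemma serD (f g : ser R) n : (f + g) n = f n + g n. Proof. by []. Qed.
Lemma serN (f : ser R) n : (- f) n = - f n. Proof. by []. Qed.
Lemma serB (f g : ser R) n : (f - g) n = f n - g n. Proof. by []. Qed.
Lemma ser0 n : (0 : ser R) n = 0. Proof. by []. Qed.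
Lemma ser1 n : (1 : ser R) n = (n == 0)%:R. Proof. by []. Qed.
Lemma serM (f g : ser R) n : (f * g) n = \sum_(k < n.+1) f k * g (n - k)%N. Proof. by []. Qed.
Lemma serS I r (P : pred I) (F : I -> ser R) n :
  (\sum_(i <- r | P i) F i) n = \sum_(i <- r | P i) F i n.
Proof. by elim/big_rec2: _ => // i y1 y2 _ <-. Qed.
Lemma serMn (f : ser R) m n : (f *+ m) n = f n *+ m.
Proof. by elim: m => [|m IH]; rewrite ?mulr0n // !mulrS serD IH. Qed.

End SerRing.

Section SerB.
Variable R : comNzRingType.
Implicit Types f g h : ser R.

Definition cst (c : R) : ser R := fun n => if n == 0%N then c else 0.
Definition Zs : ser R := fun n => (n == 1%N)%:R.

Lemma cstM c f n : (cst c * f) n = c * f n.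
Proof.
rewrite serM big_ord_recl /= subn0 big1 ?addr0 // => i _.
by rewrite /cst /= mul0r.
Qed.
Lemma cst1 : cst 1 = 1.
Proof. by apply/funext => n; rewrite ser1 /cst; case: (n == 0%N). Qed.
Lemma cst0 : cst 0 = 0.
Proof. by apply/funext => n; rewrite /cst; case: (n == 0%N). Qed.
Lemma cstD a b : cst (a + b) = cst a + cst b.
Proof. by apply/funext => n; rewrite serD /cst; case: (n == 0%N); rewrite ?addr0. Qed.
Lemma cstN a : cst (- a) = - cst a.
Proof. by apply/funext => n; rewrite serN /cst; case: (n == 0%N); rewrite ?oppr0. Qed.
Lemma cstB a b : cst (a - b) = cst a - cst b.
Proof. by rewrite cstD cstN. Qed.
Lemma cstMM a b : cst (a * b) = cst a * cst b.
Proof. by apply/funext => n; rewrite cstM /cst; case: (n == 0%N); rewrite ?mulr0. Qed.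
Lemma cstX a m : cst (a ^+ m) = cst a ^+ m.
Proof. by elim: m => [|m IH]; rewrite ?cst1 // !exprS cstMM IH. Qed.
Lemma cstn m : cst m%:R = m%:R.
Proof. by elim: m => [|m IH]; rewrite ?cst0 // !mulrS cstD cst1 IH. Qed.
Lemma cstS I r (P : pred I) (F : I -> R) :
  cst (\sum_(i <- r | P i) F i) = \sum_(i <- r | P i) cst (F i).
Proof. by elim/big_rec2: _ => [|i y1 y2 _ <-]; rewrite ?cst0 ?cstD. Qed.
Lemma cst0E c : cst c 0 = c. Proof. by []. Qed.

Lemma ZsM f n : (Zs * f) n = if n is n'.+1 then f n' else 0.
Proof.
rewrite serM big_ord_recl /Zs /= mul0r add0r; case: n => [|n]; first by rewrite big_ord0.
rewrite big_ord_recl /= subn1 /= mul1r big1 ?addr0 // => i _.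
by rewrite /bump /= mul0r.
Qed.

Lemma ZsXM m f n : (Zs ^+ m * f) n = if (m <= n)%N then f (n - m)%N else 0.
Proof.
elim: m f n => [|m IH] f n; first by rewrite expr0 mul1r subn0.
rewrite exprSr -mulrA IH; case: (leqP m n) => mn.
  rewrite ZsM; case E: (n - m)%N => [|k].
    by rewrite ifF //; move: E mn; lia.
  by rewrite ifT; [congr f; move: E mn; lia | move: E mn; lia].
by rewrite ifF //; move: mn; lia.
Qed.

Lemma ZsX m n : (Zs ^+ m) n = (n == m)%:R.
Proof.
rewrite -[Zs ^+ m]mulr1 ZsXM ser1; case: (leqP m n) => mn.
  by congr (_ %:R); apply/eqP; case: eqP; case: eqP => //; lia.
by rewrite (_ : (n == m) = false) //; apply/eqP; lia.
Qed.

Lemma serM_ext f g f' g' n :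
  (forall k, (k <= n)%N -> f k = f' k) -> (forall k, (k <= n)%N -> g k = g' k) ->
  (f * g) n = (f' * g') n.
Proof.
move=> Hf Hg; rewrite !serM; apply: eq_bigr => [[k lk]] _ /=.
by rewrite Hf // Hg // leq_subr.
Qed.

Lemma pow_vanish f m n : f 0%N = 0 -> (n < m)%N -> (f ^+ m) n = 0.
Proof.
move=> f0; elim: m n => [|m IH] n //; rewrite ltnS => nm.
rewrite exprS serM big1 // => [[k lk]] _ /=.
case: k lk => [|k] lk; first by rewrite f0 mul0r.
by rewrite IH ?mulr0 //; move: nm lk; lia.
Qed.

Lemma serDist I r (P : pred I) (F : I -> ser R) n :
  (\sum_(i <- r | P i) F i) n = \sum_(i <- r | P i) F i n.
Proof. exact: serS. Qed.

End SerB.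

Section BigLemmas.
Variable V : nmodType.
Lemma sum_trunc (N d : nat) (F : nat -> V) :
  (forall m, (N <= m)%N -> F m = 0) ->
  \sum_(m < N + d) F m = \sum_(m < N) F m.
Proof.
move=> H; elim: d => [|d IH]; first by rewrite addn0.
by rewrite addnS big_ord_recr /= IH H ?addr0 // leq_addr.
Qed.
Lemma sum_split2 (n : nat) (F : nat -> V) :
  \sum_(m < n.*2) F m = \sum_(k < n) (F k.*2 + F k.*2.+1).
Proof.
elim: n => [|n IH]; first by rewrite !big_ord0.
by rewrite doubleS !big_ord_recr /= IH addrA.
Qed.
End BigLemmas.

Section SerC.
Variable R : comNzRingType.
Local Notation S1 := (ser R).
Local Notation S2 := (ser (ser R)).
Implicit Types f g : S1.
Implicit Types X Y : S2.

Definition Cc (g : S1) : S2 := cst g.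
Definition I1 (f : S1) : S2 := fun a => cst (f a).

Lemma I1M f g : I1 (f * g) = I1 f * I1 g.
Proof.
apply/funext => a; rewrite serM /I1 serM cstS; apply: eq_bigr => i _.
by rewrite cstMM.
Qed.
Lemma I1D f g : I1 (f + g) = I1 f + I1 g.
Proof. by apply/funext => a; rewrite /I1 serD cstD. Qed.
Lemma I1N f : I1 (- f) = - I1 f.
Proof. by apply/funext => a; rewrite /I1 serN cstN. Qed.
Lemma I1B f g : I1 (f - g) = I1 f - I1 g.
Proof. by rewrite I1D I1N. Qed.
Lemma I11 : I1 1 = 1.
Proof. by apply/funext => a; rewrite /I1 !ser1 cstn. Qed.
Lemma I1X f m : I1 (f ^+ m) = I1 f ^+ m.
Proof. by elim: m => [|m IH]; rewrite ?I11 // !exprS I1M IH. Qed.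
Lemma I1cst c : I1 (cst c) = Cc (cst c).
Proof. by apply/funext => a; apply/funext => n; rewrite /I1 /Cc /cst; case: (a == 0%N); case: (n == 0%N). Qed.
Lemma I1Zs : I1 (Zs R) = Zs (ser R).
Proof. by apply/funext => a; rewrite /I1 /Zs cstn. Qed.

Lemma CcM f g : Cc (f * g) = Cc f * Cc g. Proof. exact: cstMM. Qed.
Lemma CcD f g : Cc (f + g) = Cc f + Cc g. Proof. exact: cstD. Qed.
Lemma CcB f g : Cc (f - g) = Cc f - Cc g. Proof. exact: cstB. Qed.
Lemma Cc1 : Cc 1 = 1. Proof. exact: cst1. Qed.
Lemma CcX f m : Cc (f ^+ m) = Cc f ^+ m. Proof. exact: cstX. Qed.

Lemma I1ME f X a b : (I1 f * X) a b = \sum_(i < a.+1) f i * X (a - i)%N b.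
Proof. by rewrite serM serS; apply: eq_bigr => i _; rewrite cstM. Qed.
Lemma CcME g X a : (Cc g * X) a = g * X a.
Proof. exact: cstM. Qed.
Lemma tensorE f g a b : (I1 f * Cc g) a b = f a * g b.
Proof.
rewrite mulrC CcME mulrC cstM /I1 /=; by [].
Qed.
Lemma cstcME c X a b : (Cc (cst c) * X) a b = c * X a b.
Proof. by rewrite CcME cstM. Qed.
Lemma z1XME e X a b : (I1 (Zs R) ^+ e * X) a b = if (e <= a)%N then X (a - e)%N b else 0.
Proof. by rewrite I1Zs ZsXM; case: ifP. Qed.
Lemma z2XME e X a b : (Cc (Zs R) ^+ e * X) a b = if (e <= b)%N then X a (b - e)%N else 0.
Proof. by rewrite -CcX CcME ZsXM. Qed.

End SerC.

Section SerD.
Variable K : numFieldType.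
Local Notation S1 := (ser K).
Implicit Types f g h X L : S1.

Definition Dr f : S1 := fun n => n%:R * f n.

Lemma DrE f n : Dr f n = n%:R * f n. Proof. by []. Qed.

Lemma DrM f g : Dr (f * g) = Dr f * g + f * Dr g.
Proof.
apply/funext => n; rewrite /Dr serD !serM mulr_sumr -big_split /=.
apply: eq_bigr => [[k lk]] _ /=.
have -> : n = (k + (n - k))%N by rewrite subnKC.
rewrite natrD addKn mulrDl; congr (_ + _); [exact: mulrA | exact: mulrCA].
Qed.
Lemma DrD f g : Dr (f + g) = Dr f + Dr g.
Proof. by apply/funext => n; rewrite /Dr !serD mulrDr. Qed.
Lemma DrN f : Dr (- f) = - Dr f.
Proof. by apply/funext => n; rewrite /Dr !serN mulrN. Qed.
Lemma DrB f g : Dr (f - g) = Dr f - Dr g.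
Proof. by rewrite DrD DrN. Qed.
Lemma Drcst c : Dr (cst c) = 0.
Proof. by apply/funext => n; rewrite /Dr /cst; case: n => [|n] /=; rewrite ?mul0r ?mulr0. Qed.
Lemma Dr1 : Dr 1 = 0.
Proof. by rewrite -cst1 Drcst. Qed.
Lemma DrcstM c f : Dr (cst c * f) = cst c * Dr f.
Proof. by rewrite DrM Drcst mul0r add0r. Qed.
Lemma DrX f m : Dr (f ^+ m.+1) = (f ^+ m * Dr f) *+ m.+1.
Proof.
elim: m => [|m IH]; first by rewrite expr1 expr0 mul1r.
rewrite [f ^+ m.+2]exprS DrM IH [in RHS]mulrS mulrnAr mulrA -exprS; congr (_ + _).
by rewrite mulrC.
Qed.

Lemma natr_neq0 n : (n.+1%:R : K) != 0.
Proof. by rewrite pnatr_eq0. Qed.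

Lemma Dr_eq0 X : Dr X = 0 -> X = cst (X 0%N).
Proof.
move=> H; apply/funext => n; rewrite /cst; case: n => [|n] //=.
have := congr1 (fun f : S1 => f n.+1) H; rewrite /Dr /= => /eqP.
by rewrite mulf_eq0 (negbTE (natr_neq0 n)) /= => /eqP.
Qed.

Lemma ser_cancel (c : S1) X : c 0%N != 0 -> c * X = 0 -> X = 0.
Proof.
move=> c0 H; apply/funext => n; elim/ltn_ind: n => n IH.
have := congr1 (fun f : S1 => f n) H; rewrite serM ser0 big_ord_recl /= subn0.
rewrite big1 ?addr0 => [/eqP|]; first by rewrite mulf_eq0 (negbTE c0) /= => /eqP.
by move=> [i li] _ /=; rewrite IH ?mulr0 //; rewrite /bump /=; lia.
Qed.

Lemma natr2_neq0 : (2%:R : K) != 0. Proof. exact: natr_neq0. Qed.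

Definition expS (L : S1) : S1 := fun n => \sum_(m < n.+1) (L ^+ m) n / (m`!)%:R.
Definition expT (L : S1) (N : nat) : S1 := \sum_(m < N) cst ((m`!)%:R^-1) * L ^+ m.

Lemma expT_E L N n : L 0%N = 0 -> (n < N)%N -> expT L N n = expS L n.
Proof.
move=> L0 nN; rewrite /expT /expS serS.
have -> : N = (n.+1 + (N - n.+1))%N by rewrite subnKC.
rewrite (@sum_trunc _ n.+1 (N - n.+1) (fun m : nat => (cst ((m`!)%:R^-1) * L ^+ m) n)); first by apply: eq_bigr => i _; rewrite cstM mulrC.
by move=> m nm; rewrite cstM pow_vanish ?mulr0.
Qed.

Lemma expT_D L N : Dr L * expT L N = \sum_(m < N.+1) cst ((m`!)%:R^-1) * Dr (L ^+ m).
Proof.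
rewrite big_ord_recl /= expr0 Dr1 mulr0 add0r /expT mulr_sumr.
apply: eq_bigr => [[m lm]] _ /=; rewrite /bump /= add1n DrX.
have Hab : ((m.+1)`!%:R^-1 * m.+1%:R : K) = m`!%:R^-1.
  by rewrite factS natrM invfM mulrAC mulVf ?natr_neq0 ?mul1r.
rewrite -[_ *+ m.+1]mulr_natl -(cstn K m.+1) !mulrA -cstMM Hab.
by rewrite -mulrA mulrC.
Qed.

Lemma expS_D L : L 0%N = 0 -> Dr (expS L) = Dr L * expS L.
Proof.
move=> L0; apply/funext => n.
rewrite (serM_ext (f' := Dr L) (g' := expT L n.+1)) //; last first.
  by move=> k kn; rewrite expT_E //; rewrite ltnS.
rewrite expT_D serS [in RHS]big_ord_recr /= cstM (DrE (L ^+ n.+1)) pow_vanish // !mulr0 addr0.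
rewrite DrE /expS mulr_sumr; apply: eq_bigr => i _; rewrite cstM DrE; ring.
Qed.

Lemma expS0 L : expS L 0%N = 1.
Proof. by rewrite /expS big_ord1 expr0 ser1 /= divr1. Qed.

End SerD.

Lemma sum_even (V : nmodType) (m : nat) (T : nat -> V) :
  (forall k, odd k -> T k = 0) ->
  \sum_(k < m.*2.+1) T k = \sum_(j < m.+1) T j.*2.
Proof.
move=> H; have E := sum_split2 m.+1 T.
rewrite doubleS big_ord_recr /= (H m.*2.+1) ?addr0 in E; last by rewrite /= odd_double.
rewrite E; apply: eq_bigr => j _; rewrite (H j.*2.+1) ?addr0 //= odd_double.
by [].
Qed.

Section SerE.
Variable K : numFieldType.
Local Notation S1 := (ser K).
Implicit Types f g h X L : S1.

Definition sig f : S1 := fun n => if odd n then 0 else f n./2.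

Lemma sigE f m : sig f m.*2 = f m.
Proof. by rewrite /sig odd_double doubleK. Qed.
Lemma sigO f m : odd m -> sig f m = 0.
Proof. by rewrite /sig => ->. Qed.

Lemma sigM f g : sig (f * g) = sig f * sig g.
Proof.
apply/funext => n; rewrite serM; case: (boolP (odd n)) => On.
  rewrite sigO // big1 // => [[k lk]] _ /=.
  case: (boolP (odd k)) => Ok; first by rewrite sigO // mul0r.
  rewrite [sig g _]sigO ?mulr0 //.
  by rewrite oddB ?On ?(negbTE Ok) // -ltnS.
have En : n = (n./2).*2 by rewrite -[LHS]odd_double_half (negbTE On).
rewrite En sigE serM.
rewrite (@sum_even _ n./2 (fun k => sig f k * sig g (n./2.*2 - k)%N)); last first.
  by move=> k Ok; rewrite sigO ?mul0r.
apply: eq_bigr => [[j lj]] _ /=; rewrite sigE -doubleB sigE //.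
Qed.
Lemma sigD f g : sig (f + g) = sig f + sig g.
Proof. by apply/funext => n; rewrite /sig !serD; case: (odd n); rewrite ?addr0. Qed.
Lemma sigN f : sig (- f) = - sig f.
Proof. by apply/funext => n; rewrite /sig !serN; case: (odd n); rewrite ?oppr0. Qed.
Lemma sigB f g : sig (f - g) = sig f - sig g.
Proof. by rewrite sigD sigN. Qed.
Lemma sigcst c : sig (cst c) = cst c.
Proof.
apply/funext => n; rewrite /sig /cst; case: n => [|[|n]] //=; rewrite negbK; by case: (odd n).
Qed.
Lemma sig1 : sig 1 = 1.
Proof. by rewrite -cst1 sigcst. Qed.
Lemma sigX f m : sig (f ^+ m) = sig f ^+ m.
Proof. by elim: m => [|m IH]; rewrite ?sig1 // !exprS sigM IH. Qed.

Lemma Dr_sig f : Dr (sig f) = 2 * sig (Dr f).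
Proof.
apply/funext => n; rewrite -cstn cstM /Dr /sig; case: (boolP (odd n)) => On; first by rewrite !mulr0.
have En : n = (n./2).*2 by rewrite -[LHS]odd_double_half (negbTE On).
by rewrite {1}En -muln2 natrM mulrA [_ * 2%:R]mulrC.
Qed.

Definition Geo (a : K) : S1 := fun n => if odd n || (n == 0%N) then 0 else a ^+ n./2.

Lemma linE a n : (1 - cst a * Zs K ^+ 2) n = (n == 0%N)%:R - a * (n == 2%N)%:R.
Proof. by rewrite serB ser1 cstM ZsX. Qed.
Lemma linME a G n : ((1 - cst a * Zs K ^+ 2) * G) n = G n - (if (2 <= n)%N then a * G (n - 2)%N else 0).
Proof.
rewrite mulrBl mul1r serB -mulrA cstM ZsXM; case: ifP => _ //; by rewrite mulr0.
Qed.

Lemma Dr_lin a : Dr (1 - cst a * Zs K ^+ 2) = - (2 * ((1 - cst a * Zs K ^+ 2) * Geo a)).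
Proof.
apply/funext => n; rewrite serN -cstn cstM DrE linE linME /Geo.
case: n => [|[|[|[|n]]]] /=; rewrite ?(mulr0, mul0r, subr0, sub0r, oppr0, mulr1, expr1, negbK, subrr, mulrN) //.
  by rewrite addr0 mulr0 oppr0.
rewrite (_ : (n.+4 - 2)%N = n.+2) //; case: (odd n) => /=; first by rewrite ?(mulr0, mul0r, subr0, sub0r, oppr0).
by rewrite exprS subrr mulr0 oppr0.
Qed.

Lemma Dr_prod (I : Type) (r : seq I) (F H : I -> S1) :
  (forall i, Dr (F i) = F i * H i) ->
  Dr (\prod_(i <- r) F i) = (\prod_(i <- r) F i) * \sum_(i <- r) H i.
Proof.
move=> HF; elim: r => [|i r IH]; first by rewrite !big_nil Dr1 mulr0.
rewrite !big_cons DrM HF IH; ring.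
Qed.

Lemma expS_sig_inv (L F0 : S1) (alpha : K) (I : Type) (r : seq I) (al : I -> K) :
  L 0%N = 0 -> F0 0%N = 1 ->
  F0 * F0 = \prod_(j <- r) (1 - cst (al j) * Zs K ^+ 2) ->
  Dr (sig L) = 2 * Geo alpha + \sum_(j <- r) Geo (al j) ->
  sig (expS L) * ((1 - cst alpha * Zs K ^+ 2) * F0) = 1.
Proof.
move=> L0 F00 HF0 HL.
set B := \sum_(j <- r) Geo (al j).
have DP : Dr (F0 * F0) = (F0 * F0) * (- (2 * B)).
  rewrite HF0 (@Dr_prod _ _ _ (fun j => - (2 * Geo (al j)))); last first.
    by move=> j; rewrite Dr_lin mulrN mulrCA.
  by congr (_ * _); rewrite /B mulr_sumr -sumrN.
have DF0 : Dr F0 = - (F0 * B).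
  have H2 : F0 * (2 * (Dr F0 + F0 * B)) = 0.
    have -> : F0 * (2 * (Dr F0 + F0 * B)) = (Dr F0 * F0 + F0 * Dr F0) + F0 * F0 * (2 * B) by ring.
    by rewrite -DrM DP; ring.
  have H3 := ser_cancel (c := F0) (X := 2 * (Dr F0 + F0 * B)) (ltac:(by rewrite F00 oner_neq0)) H2.
  have c2 : (2 : S1) 0%N != 0 by rewrite -cstn cst0E natr2_neq0.
  have H4 := ser_cancel c2 H3.
  by apply/eqP; rewrite -subr_eq0 opprK H4.
have DF : Dr ((1 - cst alpha * Zs K ^+ 2) * F0) = - ((2 * Geo alpha + B) * ((1 - cst alpha * Zs K ^+ 2) * F0)).
  by rewrite DrM Dr_lin DF0; ring.
have DE : Dr (sig (expS L)) = (2 * Geo alpha + B) * sig (expS L).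
  by rewrite Dr_sig expS_D // sigM mulrA -Dr_sig HL.
set X := sig (expS L) * _.
have DX : Dr X = 0 by rewrite /X DrM DE DF; ring.
rewrite (Dr_eq0 DX) /X serM big_ord1 /= subn0.
have -> : sig (expS L) 0%N = 1 by rewrite /sig /= expS0.
by rewrite serM big_ord1 /= linE /= mulr0 subr0 F00 !mul1r cst1.
Qed.

End SerE.

Section Main1.
Variable K : numFieldType.
Local Notation S1 := (ser K).
Local Notation S2 := (ser (ser K)).

Lemma ps_mulE (f g : ps K) : ps_mul f g = ((f : S1) * g).
Proof. by []. Qed.
Lemma ps_powE (f : ps K) m : ps_pow f m = ((f : S1) ^+ m).
Proof.
elim: m => [|m IH] /=; last by rewrite IH exprS.
by apply/funext => n; rewrite expr0 ser1; case: (n == 0%N).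
Qed.
Lemma ps_expE (f : ps K) : ps_exp f = expS (f : S1).
Proof. by apply/funext => n; rewrite /ps_exp /expS; apply: eq_bigr => i _; rewrite ps_powE. Qed.

Definition Lt (t : nat -> K) : S1 := fun i => if i is 0 then 0 else t i.
Lemma schurE (t : nat -> K) m : schur t (Posz m) = expS (Lt t) m.
Proof. by rewrite /schur ps_expE. Qed.
Lemma schurN (t : nat -> K) n : schur t (Negz n) = 0.
Proof. by []. Qed.

Lemma ps_of_polyM (p q : {poly K}) : ps_of_poly (p * q) = (ps_of_poly p : S1) * ps_of_poly q.
Proof. by apply/funext => n; rewrite /ps_of_poly coefM serM. Qed.
Lemma ps_of_poly1 : ps_of_poly 1 = (1 : S1).
Proof. by apply/funext => n; rewrite /ps_of_poly coef1 ser1. Qed.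
Lemma ps_of_poly_prod I (r : seq I) (F : I -> {poly K}) :
  ps_of_poly (\prod_(i <- r) F i) = \prod_(i <- r) (ps_of_poly (F i) : S1).
Proof. by elim/big_rec2: _ => [|i y1 y2 _ <-]; rewrite ?ps_of_poly1 ?ps_of_polyM. Qed.
Lemma ps_of_poly_lin (a : K) : ps_of_poly (1 - a%:P * 'X ^+ 2) = (1 - cst a * Zs K ^+ 2 : S1).
Proof.
apply/funext => n; rewrite linE /ps_of_poly coefB coef1 coefCM coefXn; by [].
Qed.

Lemma ps2_mulE (A B : ps2 K) : ps2_mul A B = ((A : S2) * B).
Proof.
apply/funext => a; apply/funext => b; rewrite /ps2_mul serM serS.
by apply: eq_bigr => i _; rewrite serM.
Qed.
Lemma ps2_addE (A B : ps2 K) : ps2_add A B = ((A : S2) + B).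
Proof. by []. Qed.
Lemma ps2_tensorE (F G : ps K) : ps2_tensor F G = (I1 (F : S1) * Cc (G : S1)).
Proof. by apply/funext => a; apply/funext => b; rewrite tensorE. Qed.
Lemma ps2_monoE c e1 e2 :
  ps2_mono c e1 e2 = (Cc (cst c) * I1 (Zs K) ^+ e1 * Cc (Zs K) ^+ e2 : S2).
Proof.
rewrite -I1X -I1cst -I1M -CcX; apply/funext => a; apply/funext => b.
rewrite tensorE cstM !ZsX /ps2_mono.
by case: (a == e1); case: (b == e2); rewrite /= ?mulr1 ?mulr0.
Qed.

End Main1.

Lemma half_sel (N a u : nat) : (u.*2 <= N)%N ->
  [&& (a <= N)%N, ~~ odd (N - a) & ((N - a)./2 == u)] = (a == N - u.*2)%N.
Proof.
move=> H; apply/idP/idP.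
- case/and3P => aN ev /eqP <-; have := odd_double_half (N - a).
  rewrite (negbTE ev) add0n => E; apply/eqP; lia.
- by move/eqP => ->; rewrite leq_subr /= subKn // odd_double doubleK eqxx.
Qed.

Section Main2.
Variable K : numFieldType.
Local Notation S1 := (ser K).
Local Notation S2 := (ser (ser K)).
Local Notation z1 := (I1 (Zs K)).
Local Notation z2 := (Cc (Zs K)).
Local Notation kap c := (Cc (cst c)).
Local Notation X1 := (x1 K).
Local Notation X2 := (x2 K).

Lemma zsubstD N (P Q : {poly {poly K}}) :
  zsubst N (P + Q) = (zsubst N P : S2) + zsubst N Q.
Proof.
apply/funext => a; apply/funext => b; rewrite /zsubst !serD.
by case: ifP; rewrite ?coefD ?addr0.
Qed.
Lemma zsubst0 N : zsubst N (0 : {poly {poly K}}) = (0 : S2).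
Proof.
by apply/funext => a; apply/funext => b; rewrite /zsubst !ser0 coef0 coef0; case: ifP.
Qed.
Lemma zsubst_sum N n (F : 'I_n -> {poly {poly K}}) :
  zsubst N (\sum_(i < n) F i) = \sum_(i < n) (zsubst N (F i) : S2).
Proof. by elim/big_rec2: _ => [|i y1 y2 _ <-]; rewrite ?zsubst0 ?zsubstD. Qed.
Lemma zsubstC N (c : K) P : zsubst N (c%:P%:P * P) = kap c * (zsubst N P : S2).
Proof.
apply/funext => a; apply/funext => b; rewrite cstcME /zsubst.
by case: ifP; rewrite ?mulr0 // coefCM coefCM.
Qed.

Lemma zsubst_mono N u v : (u.*2 <= N)%N -> (v.*2 <= N)%N ->
  zsubst N (X1 ^+ u * X2 ^+ v) = z1 ^+ (N - u.*2) * z2 ^+ (N - v.*2) :> S2.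
Proof.
move=> Hu Hv; apply/funext => a; apply/funext => b.
rewrite -I1X -CcX tensorE !ZsX /zsubst /x1 /x2 -polyC_exp mulrC coefCM coefXn.
rewrite mulr_natr coefMn coefXn -(half_sel a Hu) -(half_sel b Hv).
case: (a <= N)%N; case: (b <= N)%N; case: (odd (N - a)); case: (odd (N - b));
  case: (_ == u); case: (_ == v) => //=; by rewrite ?mulr0n ?mulr1n ?mulr0 ?mul0r ?mulr1.
Qed.

Definition W1 : S2 := z1 ^+ 2.
Definition W2 : S2 := z2 ^+ 2.

Definition Gexpr (h : nat) (mu : nat -> K) : S2 :=
  \sum_(k < h.+1) (kap (2 * mu (4 * k.+1 - 2)%N) * (W1 * W2) ^+ k.+1
                   + kap (mu (4 * k)%N) * (W1 * W2) ^+ k * (W1 + W2)).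

Lemma Hpoly_term (C D : K) (i : nat) :
  (X1 * X2) ^+ i * (C%:P%:P + D%:P%:P * (X1 + X2)) =
  C%:P%:P * (X1 ^+ i * X2 ^+ i) + D%:P%:P * (X1 ^+ i.+1 * X2 ^+ i)
  + D%:P%:P * (X1 ^+ i * X2 ^+ i.+1) :> {poly {poly K}}.
Proof. rewrite exprMn !exprS; ring. Qed.

Lemma zsubst_Hpoly (h : nat) (mu : nat -> K) :
  zsubst (2 * h + 2) (Hpoly mu h) = Gexpr h mu :> S2.
Proof.
rewrite /Hpoly zsubst_sum /Gexpr (reindex_inj rev_ord_inj) /=.
apply: eq_bigr => [[k lk]] _ /=; rewrite Hpoly_term !zsubstD !zsubstC.
have lk' : (k <= h)%N by rewrite -ltnS.
rewrite !zsubst_mono; try (rewrite -?doubleS; lia).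
have E1 : (2 * h + 2 - (h.+1 - k.+1).*2 = 2 * k.+1)%N by lia.
have E2 : (2 * h + 2 - (h.+1 - k.+1).+1.*2 = 2 * k)%N by lia.
have E3 : (4 * h + 2 - 4 * (h.+1 - k.+1) = 4 * k.+1 - 2)%N by lia.
have E4 : (4 * h - 4 * (h.+1 - k.+1) = 4 * k)%N by lia.
rewrite E1 E2 E3 E4 !exprM -/W1 -/W2 !exprMn !exprS; rewrite /W1 /W2 !exprS expr0 !mulr1; match goal with |- ?a = ?b => change (@eq S2 a b) end; ring.
Qed.


End Main2.

Section Coefs.
Variable K : numFieldType.

Definition crev (f : {poly K}) (d m : nat) : K := if (m <= d)%N then f`_(d - m) else 0.

Lemma mu_coef_double (f : {poly K}) d m : mu_coef f d m.*2 = crev f d m.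
Proof. by rewrite /mu_coef odd_double doubleK. Qed.

Lemma sq_expand (a : K) (f : {poly K}) :
  ('X - a%:P) ^+ 2 * f = 'X ^+ 2 * f - (a *+ 2) *: ('X * f) + (a ^+ 2) *: f.
Proof. rewrite -!mul_polyC polyCMn polyC_exp -mulr_natr; ring. Qed.

Lemma crev_sq (a : K) (f : {poly K}) d :
  (forall k, (d < k)%N -> f`_k = 0) ->
  forall m, crev (('X - a%:P) ^+ 2 * f) d.+2 m =
    crev f d m - (a *+ 2) * (if m is m'.+1 then crev f d m' else 0)
    + a ^+ 2 * (if m is m'.+2 then crev f d m' else 0).
Proof.
move=> fz m; rewrite /crev sq_expand coefD coefB !coefZ coefXnM coefXM.
case: (leqP m d.+2) => md; last first.
  case: m md => [|[|m]] md //; rewrite !ifF ?mulr0 ?subr0 ?addr0 //; lia.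
case: m md => [|[|m]] md /=.
- rewrite !subn0 (_ : (d.+2 - 2 = d)%N); last by lia.
  by rewrite (fz d.+1) ?(fz d.+2) // !mulr0 subr0 addr0.
- rewrite !subn0 (_ : (d.+2 - 1 = d.+1)%N); last by lia.
  rewrite (fz d.+1) // !mulr0 !addr0.
  case: d fz {md} => [|d] fz //=; rewrite ?sub0r ?subr0 //.
- have md' : (m <= d)%N by lia.
  rewrite !subSS (_ : (d - m - 2 = d - m.+2)%N); last by lia.
  rewrite (_ : (d - m).-1 = (d - m.+1)%N); last by lia.
  rewrite md'; congr (_ - _ * _ + _).
    by case: ifP => h1; case: ifP => h2 //; lia.
  by case: ifP => h1; case: ifP => h2 //; lia.
Qed.


End Coefs.

Section Ident.
Variable K : numFieldType.
Local Notation S1 := (ser K).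
Local Notation S2 := (ser (ser K)).
Local Notation kap c := (Cc (cst c)).

Definition PP : S2 := W1 K * W2 K.
Definition SS : S2 := W1 K + W2 K.
Definition phi (m : nat) : S2 := if odd m then 2 * PP ^+ (m./2).+1 else PP ^+ (m./2) * SS.

Lemma phi_even k : phi k.*2 = PP ^+ k * SS.
Proof. by rewrite /phi odd_double doubleK. Qed.
Lemma phi_odd k : phi k.*2.+1 = 2 * PP ^+ k.+1.
Proof. by rewrite /phi /= odd_double /= uphalf_double. Qed.

Lemma kapD (a b : K) : kap (a + b) = kap a + kap b. Proof. by rewrite cstD CcD. Qed.
Lemma kapB (a b : K) : kap (a - b) = kap a - kap b. Proof. by rewrite cstB CcB. Qed.
Lemma kapM (a b : K) : kap (a * b) = kap a * kap b. Proof. by rewrite cstMM CcM. Qed.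
Lemma kap0 : kap (0 : K) = 0. Proof. by rewrite cst0; apply: cst0. Qed.
Lemma kapn m : kap (m%:R : K) = m%:R. Proof. by rewrite cstn; apply: cstn. Qed.
Lemma kapX (a : K) m : kap (a ^+ m) = kap a ^+ m. Proof. by rewrite cstX CcX. Qed.

Lemma Gexpr_phi h (mu : nat -> K) :
  Gexpr h mu = \sum_(m < (h.+1).*2) kap (mu m.*2) * phi m.
Proof.
rewrite (@sum_split2 _ h.+1 (fun m => kap (mu m.*2) * phi m)) /Gexpr.
apply: eq_bigr => [[k lk]] _ /=; rewrite phi_even phi_odd addrC.
rewrite (_ : (k.*2.*2 = 4 * k)%N); last by lia.
rewrite (_ : (k.*2.+1.*2 = 4 * k.+1 - 2)%N); last by lia.
rewrite kapM kapn -/PP -/SS /PP; ring.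
Qed.

Variable n : nat.
Variable p : nat -> K.
Variable alpha : K.
Hypothesis pz : forall m, (n.*2 <= m)%N -> p m = 0.

Definition p1 m := if m is m'.+1 then p m' else 0.
Definition p2 m := if m is m'.+2 then p m' else 0.
Definition rr m := p m - 2 * alpha * p1 m + alpha ^+ 2 * p2 m.
Definition UU : S2 := (1 - kap alpha * W1 K) * (1 - kap alpha * W2 K).

Lemma main_ident :
  UU * (\sum_(m < n.*2) kap (p m) * phi m) - \sum_(m < n.*2.+2) kap (rr m) * phi m
  = - (kap alpha * (W1 K - W2 K) ^+ 2 * \sum_(k < n) kap (p k.*2) * PP ^+ k).
Proof.
have E0 : \sum_(m < n.*2.+2) kap (p m) * phi m = \sum_(m < n.*2) kap (p m) * phi m.
  rewrite -addn2 (@sum_trunc _ n.*2 2 (fun m => kap (p m) * phi m)) //.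
  by move=> m hm; rewrite pz // kap0 mul0r.
have E1 : \sum_(m < n.*2.+2) kap (p1 m) * phi m = \sum_(m < n.*2) kap (p m) * phi m.+1.
  rewrite big_ord_recl /= kap0 mul0r add0r.
  rewrite -addn1 (@sum_trunc _ n.*2 1 (fun m => kap (p1 (bump 0 m)) * phi (bump 0 m))) //.
  by move=> m hm; rewrite /bump /= pz // kap0 mul0r.
have E2 : \sum_(m < n.*2.+2) kap (p2 m) * phi m = \sum_(m < n.*2) kap (p m) * phi m.+2.
  by rewrite big_ord_recl /= kap0 mul0r add0r big_ord_recl /= kap0 mul0r add0r.
have -> : \sum_(m < n.*2.+2) kap (rr m) * phi m =
   \sum_(m < n.*2.+2) kap (p m) * phi m - 2 * kap alpha * \sum_(m < n.*2.+2) kap (p1 m) * phi m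
   + kap alpha ^+ 2 * \sum_(m < n.*2.+2) kap (p2 m) * phi m.
  rewrite !mulr_sumr -sumrB -big_split /=; apply: eq_bigr => i _.
  by rewrite /rr kapD kapB !kapM ?kapX kapn; ring.
rewrite E0 E1 E2 !mulr_sumr -!sumrB -big_split /=.
rewrite -sumrB -sumrN.
rewrite (@sum_split2 _ n (fun i => UU * (kap (p i) * phi i) -
      (kap (p i) * phi i - 2 * kap alpha * (kap (p i) * phi i.+1) +
      kap alpha ^+ 2 * (kap (p i) * phi i.+2)))).
apply: eq_bigr => [[k lk]] _ /=.
rewrite (_ : k.*2.+2 = k.+1.*2) //.
rewrite !phi_even (phi_odd k.+1) phi_odd /UU /PP /SS !exprS; ring.
Qed.

End Ident.

Section Final.
Variable K : numFieldType.
Local Notation S1 := (ser K).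
Local Notation S2 := (ser (ser K)).
Local Notation kap c := (Cc (cst c)).
Local Notation z1 := (I1 (Zs K)).
Local Notation z2 := (Cc (Zs K)).

Lemma S2B (A B : S2) a b : (A - B) a b = A a b - B a b. Proof. by []. Qed.
Lemma S2N (A : S2) a b : (- A) a b = - A a b. Proof. by []. Qed.
Lemma S2S I (r : seq I) (F : I -> S2) a b : (\sum_(i <- r) F i) a b = \sum_(i <- r) F i a b.
Proof. by rewrite !serS. Qed.

Lemma W_cancel (X : S2) : (W1 K - W2 K) * X = 0 -> X = 0.
Proof.
move=> H; have Hab : forall a b, X a b - (if (2 <= b)%N then X a.+2 (b - 2)%N else 0) = 0.
  move=> a b; have := congr1 (fun Y : S2 => Y a.+2 b) H.
  by rewrite mulrBl S2B /W1 /W2 z1XME z2XME /= subn2 /=.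
apply/funext => a; apply/funext => b; elim/ltn_ind: b a => b IH a.
have := Hab a b; case: ifP => hb.
  by rewrite (IH (b - 2)%N) ?subr0 //; lia.
by rewrite subr0.
Qed.

Lemma kap1 : kap (1 : K) = 1. Proof. by rewrite cst1 Cc1. Qed.

Lemma expansion_S2 h (F : ps K) (H : {poly {poly K}}) q :
  is_expansion h F H q ->
  2 * (z1 * z2) * (I1 F * Cc F) + (zsubst (2 * h + 2) H : S2)
  = (z1 + z2) ^+ 2 * (I1 F * Cc F)
    + ((W1 K - W2 K) ^+ 2 * (I1 F * Cc F)) * ((fun a b => q a.+1 b.+1) : S2).
Proof.
rewrite /is_expansion; cbv zeta => Hx.
have Hf := (funext (fun a => funext (fun b => Hx a b))).
rewrite !ps2_addE !ps2_mulE !ps2_monoE !ps2_tensorE in Hf.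
have kN : forall a : K, kap (- a) = - kap a by move=> a; rewrite cstN; apply: cstN.
rewrite kN !kap1 (kapn K 2) in Hf.
move: Hf; match goal with |- ?a = ?b -> ?c => change (@eq S2 a b -> c) end => Hf.
have Z := canRL (addKr _) Hf.
rewrite Z /W1 /W2; ring.
Qed.



End Final.

Section Core.
Variable K : numFieldType.
Local Notation S1 := (ser K).
Local Notation S2 := (ser (ser K)).
Local Notation kap c := (Cc (cst c)).
Variable g : nat.
Variable alpha_ : 'I_(2 * g - 1) -> K.
Variable alpha : K.

Lemma Dr_sigL :
  Dr (sig (Lt (Lambda alpha_ alpha))) = 2 * Geo alpha + \sum_(j < 2 * g - 1) Geo (alpha_ j).
Proof.
apply/funext => m; rewrite serD -cstn cstM serS DrE.
case Om: (odd m).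
  rewrite sigO ?Om // /Geo Om /= mulr0 big1 ?addr0 ?mulr0 //.
have Em : m = (m./2).*2 by rewrite -[LHS]odd_double_half Om.
rewrite Em sigE /Geo odd_double doubleK /=.
case: (m./2) => [|k] /=; first by rewrite mul0r mulr0 big1 ?addr0.
rewrite /Lambda -mul2n mulrC divfK //.
by rewrite pnatr_eq0 muln_eq0.
Qed.


Lemma eq_by (V : comNzRingType) (x a b : V) : a = b -> x = a - b -> x = 0.
Proof. by move=> -> ->; rewrite subrr. Qed.

Lemma schur_diff (t : nat -> K) (i k : nat) :
  schur t (Posz i - Posz k) = if (k <= i)%N then expS (Lt t) (i - k)%N else 0.
Proof.
case: leqP => ki; first by rewrite subzn // schurE.
case E: (Posz i - Posz k)%R => [m|m] //.
exfalso; move: E ki; lia.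
Qed.

Lemma f_gm1_size k : (2 * g - 1 < k)%N -> (f_gm1 alpha_)`_k = 0.
Proof.
move=> hk; apply: nth_default; by rewrite /f_gm1 size_prod_XsubC -[index_enum _]enumT size_enum_ord.
Qed.

Definition pp (m : nat) : K := mu_tilde alpha_ m.*2.

Lemma pp_crev m : pp m = crev (f_gm1 alpha_) (2 * g - 1) m.
Proof. by rewrite /pp /mu_tilde mu_coef_double. Qed.

Lemma pz : (1 <= g)%N -> forall m, (g.*2 <= m)%N -> pp m = 0.
Proof. by move=> g1 m hm; rewrite pp_crev /crev ifF //; lia. Qed.

Lemma rrE : (1 <= g)%N -> forall m, mu alpha_ alpha m.*2 = rr pp alpha m.
Proof.
move=> g1 m; rewrite /mu mu_coef_double /f_g.
rewrite (_ : (2 * g + 1 = (2 * g - 1).+2)%N); last by lia.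
rewrite crev_sq; last by move=> k hk; apply: f_gm1_size.
rewrite /rr /p1 /p2 !pp_crev; by case: m => [|[|m]]; rewrite -?[alpha *+ 2]mulr_natl ?pp_crev.
Qed.

End Core.


Section Core2.
Variable K : numFieldType.
Local Notation S1 := (ser K).
Local Notation S2 := (ser (ser K)).
Local Notation kap c := (Cc (cst c)).
Local Notation z1 := (I1 (Zs K)).
Local Notation z2 := (Cc (Zs K)).

Theorem core (g : nat)
    (alpha_ : 'I_(2 * g - 1) -> K) (alpha : K)
    (F0 : nat -> K) (qg0 qgm1 : nat -> nat -> K) :
  (1 <= g)%N ->
  is_sqrt_series F0 (F0_square alpha_) ->
  is_expansion g (F_of alpha F0) (H_g alpha_ alpha) qg0 ->
  is_expansion g.-1 F0 (H_gm1 alpha_) qgm1 ->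
  forall i j : nat,
    - qg0 (2 * i + 1)%N (2 * j + 1)%N + qgm1 (2 * i + 1)%N (2 * j + 1)%N
    = - alpha * \sum_(k < g)
        mu_tilde alpha_ (4 * k) * schur (Lambda alpha_ alpha) (Posz i - Posz k)
                               * schur (Lambda alpha_ alpha) (Posz j - Posz k).
Proof.
move=> g1 [F00 HF0] Hg H0 i j.
set L := Lt (Lambda alpha_ alpha).
set E2 := sig (expS L).
have Fdef : (F_of alpha F0 : S1) = (1 - cst alpha * Zs K ^+ 2) * F0.
  by rewrite /F_of ps_mulE ps_of_poly_lin.
have FF0 : (F0 : S1) * F0 = \prod_(j < 2 * g - 1) (1 - cst (alpha_ j) * Zs K ^+ 2).
  have -> : \prod_(j < 2 * g - 1) (1 - cst (alpha_ j) * Zs K ^+ 2) = ps_of_poly (F0_square alpha_).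
    by rewrite /F0_square ps_of_poly_prod; apply: eq_bigr => k _; rewrite ps_of_poly_lin.
  by apply/funext => n; rewrite -ps_mulE HF0.
have EF : E2 * F_of alpha F0 = 1.
  rewrite Fdef; apply: (expS_sig_inv (r := index_enum 'I_(2 * g - 1)) (al := alpha_)) => //.
  exact: Dr_sigL.
have Hg2 := expansion_S2 Hg.
have H02 := expansion_S2 H0.
rewrite /H_g zsubst_Hpoly Gexpr_phi in Hg2.
rewrite /H_gm1 zsubst_Hpoly Gexpr_phi prednK // in H02.
have G1eq : \sum_(m < g.+1.*2) kap (mu alpha_ alpha m.*2) * phi K m
    = \sum_(m < g.*2.+2) kap (rr (pp alpha_) alpha m) * phi K m.
  by apply: eq_bigr => m _; rewrite (rrE alpha_ alpha g1).
rewrite G1eq in Hg2.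
set T0 : S2 := (fun a b => qgm1 a.+1 b.+1) in H02.
set Tg : S2 := (fun a b => qg0 a.+1 b.+1) in Hg2.
set A : S2 := I1 F0 * Cc F0 in H02.
set B : S2 := I1 (F_of alpha F0) * Cc (F_of alpha F0) in Hg2.
have BA : B = UU alpha * A.
  rewrite /B /A Fdef I1M CcM I1B I11 I1M I1cst I1X CcB Cc1 CcM CcX /UU /W1 /W2; ring.
have eG0 := canRL (addKr _) H02.
have eG1 := canRL (addKr _) Hg2.
have I := main_ident alpha (pz alpha_ g1).
set Pi := \sum_(k < g) _ in I.
rewrite /pp in I; rewrite eG0 eG1 BA in I.
have Hc : B * (T0 - Tg) + kap alpha * Pi = 0.
  apply: W_cancel; apply: W_cancel; apply: (eq_by I); rewrite BA /W1 /W2; ring.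
set EE : S2 := I1 E2 * Cc E2.
have EB : EE * B = 1.
  have -> : EE * B = I1 (E2 * F_of alpha F0) * Cc (E2 * F_of alpha F0).
    by rewrite /EE /B I1M CcM; ring.
  by rewrite EF I11 Cc1 mulr1.
have key : T0 - Tg = - (kap alpha * Pi * EE).
  transitivity (EE * B * (T0 - Tg)); first by rewrite EB mul1r.
  have -> : EE * B * (T0 - Tg) = EE * (B * (T0 - Tg) + kap alpha * Pi) - kap alpha * Pi * EE by ring.
  by rewrite Hc mulr0 sub0r.
have PPE : forall k, PP K ^+ k * EE = I1 (Zs K ^+ k.*2 * E2) * Cc (Zs K ^+ k.*2 * E2).
  move=> k; rewrite /PP /W1 /W2 /EE !I1M !CcM !I1X !CcX -!mul2n !exprM exprMn; ring.
have := congr1 (fun X : S2 => X i.*2 j.*2) key.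
rewrite S2B S2N -mulrA cstcME /Pi mulr_suml S2S /T0 /Tg /=.
rewrite (_ : (2 * i + 1 = i.*2.+1)%N); last by lia.
rewrite (_ : (2 * j + 1 = j.*2.+1)%N); last by lia.
rewrite addrC => ->; rewrite mulNr; congr (- (_ * _)).
apply: eq_bigr => [[k lk]] _ /=.
rewrite -mulrA PPE cstcME tensorE !ZsXM !leq_double !schur_diff.
rewrite /pp (_ : (k.*2.*2 = 4 * k)%N); last by lia.
rewrite /E2 -!doubleB !sigE -/L mulrA.
by case: ifP; case: ifP; rewrite ?mulr0.
Qed.

End Core2.


Unset Implicit Arguments.

Theorem proposition5 (R : realType) (g : nat)
    (alpha_ : 'I_(2 * g - 1) -> R[i]) (alpha : R[i])
    (F0 : nat -> R[i]) (qg0 qgm1 : nat -> nat -> R[i]) :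
  (1 <= g)%N ->
  injective alpha_ -> (forall j, alpha_ j != alpha) ->
  is_sqrt_series F0 (F0_square alpha_) ->
  is_expansion g (F_of alpha F0) (H_g alpha_ alpha) qg0 ->
  is_expansion g.-1 F0 (H_gm1 alpha_) qgm1 ->
  forall i j : nat,
    - qg0 (2 * i + 1)%N (2 * j + 1)%N + qgm1 (2 * i + 1)%N (2 * j + 1)%N
    = - alpha * \sum_(k < g)
        mu_tilde alpha_ (4 * k) * schur (Lambda alpha_ alpha) (i%:Z - k%:Z)
                               * schur (Lambda alpha_ alpha) (j%:Z - k%:Z).
Proof.
move=> g1 _ _ Hsq Hg H0 i j.
exact: (@core (R[i] : numFieldType) g alpha_ alpha F0 qg0 qgm1 g1 Hsq Hg H0 i j).
Qed.
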